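(* Let $\rho_-\in[0,2]$ and define the measure $\mathrm{d}\rho=\rho_-\,\mathrm{d}x\llcorner[0,1]+(2-\rho_-)\,\mathrm{d}x\llcorner[1,2]$ on $[0,2]$. Let $T_{\rho_-}:[0,2]\to[0,2]$ be given, for $\rho_-\in(0,2)$, by \[T_{\rho_-}(x)=\begin{cases}\dfrac{x}{\rho_-} & x\le\rho_-,\\[2mm] 2-\dfrac{2-x}{2-\rho_-} & x>\rho_-,\end{cases}\] and by $T_0(0)=1$, $T_0(x)=1+\frac x2$ for $x>0$, and $T_2(x)=\frac x2$ for $x\le 2$. Then $\rho$ is the push-forward of Lebesgue measure on $[0,2]$ under $T_{\rho_-}$, i.e. $\mathrm{d}\rho=(T_{\rho_-})_\#\mathrm{d}x$, and \[\int_{[0,2]}(T_{\rho_-}(x)-x)^2\,\mathrm{d}x\lesssim(\rho_--1)^2,\] \[\int_{[0,2]}\Big(\tfrac12(T_{\rho_-}(x)-x)+\tfrac12(T_{2-\rho_-}(x)-x)\Big)^2\,\mathrm{d}x\lesssim(\rho_--1)^4.\]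
   Context: $A\lesssim B$ means $A\le CB$ for a finite universal constant $C$ (independent of $\rho_-$). $\mathrm{d}x\llcorner[a,b]$ denotes Lebesgue measure restricted to $[a,b]$, and $T_\#\mu(A)=\mu(T^{-1}(A))$ for Borel $A$. *)

(* Defs.v *)
From HB Require Import structures.
From mathcomp Require Import all_boot all_order all_algebra.
From mathcomp Require Import all_classical all_reals all_analysis.
Set Implicit Arguments. Unset Strict Implicit. Unset Printing Implicit Defensive.
Import Order.TTheory GRing.Theory Num.Theory.
Local Open Scope classical_set_scope.
Local Open Scope ring_scope.

(* The transport map T_{rho_-} : [0,2] -> [0,2] (defined on all of R;
   only its values on [0,2] matter). *)
Definition Tmap {R : realType} (rm : R) (x : R) : R :=
  if rm == 0 then (if x == 0 then 1 else 1 + x / 2)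
  else if rm == 2 then x / 2
  else if x <= rm then x / rm else 2 - (2 - x) / (2 - rm).

Definition rho_meas {R : realType} (rm : R) (A : set R) : \bar R :=
  let I01 : set R := `[(0:R), 1]%classic in
  let I12 : set R := `[(1:R), 2]%classic in
  let c1 : \bar R := rm%:E in
  let c2 : \bar R := (2 - rm)%:E in
  (c1 * (@lebesgue_measure R) (A `&` I01) + c2 * (@lebesgue_measure R) (A `&` I12))%E.

Definition pushforward_leb02 {R : realType} (T : R -> R) (A : set R) : \bar R :=
  (@lebesgue_measure R) (`[(0:R), 2]%classic `&` T @^-1` A).

(* Main.v *)
Require Import Defs.
From HB Require Import structures.
From mathcomp Require Import all_boot all_order all_algebra.
From mathcomp Require Import all_classical all_reals all_analysis.
From mathcomp Require Import ring lra.
Import Order.TTheory GRing.Theory Num.Theory.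
Local Open Scope classical_set_scope.
Local Open Scope ring_scope.

Section S.
Variable R : realType.
Local Notation leb := (@lebesgue_measure R).
Lemma mes_aff (c b : R) : measurable_fun (T:=measurableTypeR R) (U:=measurableTypeR R) setT (fun x : R => (x - b) / c).
Proof.
apply: measurable_realfun.measurable_funM => //; apply: measurable_realfun.measurable_funB => //.
Qed.

Lemma leb_aff (c b : R) (A : set R) : 0 < c -> measurable A ->
  leb ((fun x => ((x - b) / c)%R) @^-1` A) = (c%:E * leb A)%E.
Proof.
move=> c0 mA.
pose P := measure_function_pushforward__canonical__measure_function_Measure leb (mes_aff c b).
have ci : 0 <= c^-1 by rewrite invr_ge0 ltW.
pose r : {nonneg R} := NngNum ci.
have key : leb A = mscale r P A.
  apply: (@lebesgue_measure_unique R (mscale r P)) => // X /ocitvP [->|[[x1 x2] /= x12 ->]].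
    by rewrite measure0.
  have -> : mscale r P `]x1, x2]%classic = ((c^-1)%:E * leb ((fun x => ((x - b) / c)%R) @^-1` `]x1, x2]%classic))%E by [].
  have -> : (fun x => (x - b) / c) @^-1` `]x1, x2]%classic = `](c * x1 + b), (c * x2 + b)]%classic.
    apply/seteqP; split => x /=; rewrite !in_itv /=.
      move=> /andP[h1 h2]; rewrite ltr_pdivlMr // in h1; rewrite ler_pdivrMr // in h2.
      by apply/andP; split; lra.
    move=> /andP[h1 h2]; rewrite ltr_pdivlMr // ler_pdivrMr //.
    by apply/andP; split; lra.
  rewrite !lebesgue_measure_itv /= !lte_fin x12 ltrD2r ltr_pM2l // x12.
  rewrite -!EFinD -EFinM; congr (_%:E); field; lra.
rewrite key.
have -> : mscale r P A = ((c^-1)%:E * leb ((fun x => ((x - b) / c)%R) @^-1` A))%E by [].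
rewrite muleA -EFinM mulfV ?gt_eqF // mul1e.
by [].
Qed.

Lemma Tm_int (rm x : R) : 0 < rm < 2 ->
  Tmap rm x = if x <= rm then x / rm else 2 - (2 - x) / (2 - rm).
Proof.
move=> /andP[r0 r2]; rewrite /Tmap gt_eqF // lt_eqF //.
Qed.

Lemma setE_int (rm : R) (A : set R) : 0 < rm < 2 ->
  `[0%R, 2%R]%classic `&` Tmap rm @^-1` A =
  (fun x => (x - 0) / rm) @^-1` (A `&` `[0%R, 1%R]%classic) `|`
  (fun x => (x - (2 - 2 * (2 - rm))) / (2 - rm)) @^-1` (A `&` `]1%R, 2%R]%classic).
Proof.
move=> rr; have /andP[r0 r2] := rr.
have s0 : 0 < 2 - rm by rewrite subr_gt0.
apply/seteqP; split => x /=.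
- rewrite in_itv /= Tm_int // => -[/andP[x0 x2]]; case: ifP => xr Ax.
    left; rewrite subr0; split => //; rewrite in_itv /=.
    by rewrite ler_pdivlMr // mul0r ler_pdivrMr // mul1r x0.
  right; have -> : (x - (2 - 2 * (2 - rm))) / (2 - rm) = 2 - (2 - x) / (2 - rm).
    by field; rewrite gt_eqF.
  split => //; rewrite in_itv /=.
  move/negbT: xr; rewrite -ltNge => xr.
  have q0 : 0 <= (2 - x) / (2 - rm) by rewrite divr_ge0 //; lra.
  have q1 : (2 - x) / (2 - rm) < 1 by rewrite ltr_pdivrMr // mul1r; lra.
  by apply/andP; split; lra.
- case => -[Ax]; rewrite !in_itv /= => /andP[h1 h2].
    rewrite subr0 ler_pdivlMr // mul0r in h1; rewrite subr0 ler_pdivrMr // mul1r in h2.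
    split; first by apply/andP; split; lra.
    by rewrite Tm_int // h2 -(subr0 x).
  rewrite ltr_pdivlMr // mul1r in h1; rewrite ler_pdivrMr // in h2.
  split; first by apply/andP; split; nra.
  rewrite Tm_int // ifF; last by apply/negbTE; rewrite -ltNge; lra.
  suff -> : 2 - (2 - x) / (2 - rm) = (x - (2 - 2 * (2 - rm))) / (2 - rm) by [].
  by field; rewrite gt_eqF.
Qed.

Lemma null_add (Y Z : set R) (p : R) : measurable Y -> Z `<=` [set p] ->
  leb (Y `|` Z) = leb Y.
Proof.
move=> mY Zp.
have [Zp'|nZp] := pselect (Z p).
  have -> : Z = [set p] by apply/seteqP; split => // x ->.
  by apply: measureU0 => //; exact: lebesgue_measure_set1.
have -> : Z = set0 by apply/seteqP; split => // x /[dup] /Zp -> /nZp.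
by rewrite setU0.
Qed.

Lemma I12 (A : set R) : measurable A ->
  leb (A `&` `[1%R, 2%R]%classic) = leb (A `&` `]1%R, 2%R]%classic).
Proof.
move=> mA.
have -> : A `&` `[1%R, 2%R]%classic = (A `&` `]1%R, 2%R]%classic) `|` (A `&` `[1%R, 2%R]%classic `&` [set 1]).
  apply/seteqP; split => x /=.
    move=> [Ax]; rewrite !in_itv /= => /andP[h1 h2].
    have [x1e|x1] := eqVneq x 1; first by (subst x; right; split; [split; [exact: Ax | rewrite lexx h2] | ]).
    by left; split => //; rewrite h2 andbT lt_neqAle eq_sym x1.
  case => -[Ax]; rewrite in_itv /=; last by case.
  by move=> /andP[h1 h2]; split => //; rewrite in_itv /= h2 ltW.
apply: (@null_add _ _ 1); last by move=> x [].
by apply: measurableI.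
Qed.

Lemma setE0 (A : set R) :
  `[0%R, 2%R]%classic `&` Tmap 0 @^-1` A =
  ((fun x => (x - (-2)) / 2) @^-1` (A `&` `]1%R, 2%R]%classic)) `|`
  (`[0%R, 2%R]%classic `&` Tmap 0 @^-1` A `&` [set 0]).
Proof.
have T0 x : Tmap 0 x = if x == 0 then 1 else 1 + x / 2 by rewrite /Tmap eqxx.
apply/seteqP; split => x /=.
- move=> [x02 Ax]; have [x0|x0] := eqVneq x 0; first by right.
  left; move: Ax; rewrite T0 (negbTE x0) => Ax.
  have -> : (x - -2) / 2 = 1 + x / 2 by field.
  split => //; move: x02; rewrite ?in_itv /= => /andP[h1 h2].
  have xp : 0 < x by rewrite lt_neqAle eq_sym x0.
  by apply/andP; split; lra.
- case; last by case.
  move=> [Ax]; rewrite ?in_itv /= => /andP[h1 h2].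
  rewrite ltr_pdivlMr // in h1; rewrite ler_pdivrMr // in h2.
  have x0 : x != 0 by apply/eqP => x0; rewrite x0 in h1; lra.
  split; first by apply/andP; split; lra.
  rewrite T0 (negbTE x0).
  suff -> : 1 + x / 2 = (x - -2) / 2 by [].
  by field.
Qed.

Lemma setE2 (A : set R) :
  `[0%R, 2%R]%classic `&` Tmap 2 @^-1` A =
  (fun x => (x - 0) / 2) @^-1` (A `&` `[0%R, 1%R]%classic).
Proof.
have T2 x : Tmap 2 x = x / 2 by rewrite /Tmap eqxx pnatr_eq0.
apply/seteqP; split => x /=; rewrite ?in_itv /= T2 subr0.
- move=> [/andP[h1 h2] Ax]; split => //; rewrite ?in_itv /=.
  by rewrite ler_pdivlMr // ler_pdivrMr // mul0r mul1r h1 h2.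
- move=> [Ax]; rewrite ?in_itv /= ler_pdivlMr // ler_pdivrMr // mul0r mul1r.
  by move=> /andP[h1 h2]; split => //; apply/andP; split; lra.
Qed.

Lemma preim_meas (c b : R) (B : set R) : measurable B ->
  measurable ((fun x => (x - b) / c) @^-1` B).
Proof. by move=> mB; rewrite -[X in measurable X]setTI; exact: mes_aff. Qed.

Lemma push (rm : R) (A : set R) : 0 <= rm <= 2 -> measurable A ->
  rho_meas rm A = pushforward_leb02 (Tmap rm) A.
Proof.
move=> /andP[r0 r2] mA; rewrite /rho_meas /pushforward_leb02 /=.
have mA01 : measurable (A `&` `[0%R, 1%R]%classic) by apply: measurableI.
have mA12 : measurable (A `&` `]1%R, 2%R]%classic) by apply: measurableI.
have [->|rn0] := eqVneq rm 0.
  rewrite setE0 (@null_add _ _ 0); last 2 first.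
  - exact: preim_meas.
  - by move=> x [].
  by rewrite leb_aff // mul0e add0e subr0 I12.
have [->|rn2] := eqVneq rm 2.
  by rewrite setE2 leb_aff // subrr mul0e adde0.
have rr : 0 < rm < 2 by rewrite lt_def rn0 r0 lt_neqAle rn2 r2.
have s0 : 0 < 2 - rm by rewrite subr_gt0 lt_neqAle rn2.
have rp : 0 < rm by rewrite lt_def rn0.
rewrite setE_int // measureU; first last.
- apply/seteqP; split => x //= [[_ h1] [_ h2]]; move: h1 h2; rewrite ?in_itv /=.
  rewrite subr0 ler_pdivrMr // ltr_pdivlMr // => /andP[_ h1] /andP[h2 _]; lra.
- exact: preim_meas.
- exact: preim_meas.
have E (c b : R) (B : set R) : 0 < c -> measurable B -> lebesgue_measure_lebesgue_measure__canonical__measure_function_Content R ((fun x => (x - b) / c) @^-1` B) = (c%:E * leb B)%E by exact: leb_aff.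
by rewrite !E // I12.
Qed.
Lemma sq_le_mul (a b c : R) : a ^+ 2 <= c ^+ 2 -> b ^+ 2 <= c ^+ 2 ->
  (a * b) ^+ 2 <= c ^+ 4.
Proof.
move=> ha hb; rewrite exprMn (_ : c ^+ 4 = c ^+ 2 * c ^+ 2); last by field; rewrite ?n20 ?rn0 ?rn0'.
by apply: ler_pM => //; exact: sqr_ge0.
Qed.

Lemma inv_sq (s : R) : 1 <= s -> (s^-1 - 1) ^+ 2 <= (s - 1) ^+ 2.
Proof.
move=> s1; have s0 : s != 0 by apply/eqP => s0; rewrite s0 in s1; lra.
set w := s^-1.
have ws : w * s = 1 by rewrite /w mulVf.
have w0 : 0 < w by rewrite /w invr_gt0; lra.
have w1 : w <= 1 by rewrite /w invf_le1 //; lra.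
clearbody w.
rewrite (_ : w - 1 = w * (1 - s)); last by rewrite mulrBr mulr1 ws.
rewrite exprMn (_ : (s - 1) ^+ 2 = (1 - s) ^+ 2); last by field; rewrite ?n20 ?rn0 ?rn0'.
rewrite -[X in _ <= X]mul1r; apply: ler_wpM2r; [exact: sqr_ge0 | nra].
Qed.

Lemma caseA (rm y : R) : 0 < rm < 2 -> 0 <= y -> y <= rm -> y <= 2 - rm ->
  ((y / rm + y / (2 - rm) - 2 * y) / 2) ^+ 2 <= (rm - 1) ^+ 4.
Proof.
move=> /andP[r0 r2] y0 yr yr'.
have rn : rm != 0 by rewrite gt_eqF.
have rn' : 2 - rm != 0 by rewrite gt_eqF // subr_gt0.
set t := y / rm; set u := y / (2 - rm).
have yt : y = t * rm by rewrite /t mulfVK.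
have yu : y = u * (2 - rm) by rewrite /u mulfVK.
have t0 : 0 <= t by rewrite /t divr_ge0 //; lra.
have t1 : t <= 1 by rewrite /t ler_pdivrMr // mul1r.
have u0 : 0 <= u by rewrite /u divr_ge0 //; lra.
have u1 : u <= 1 by rewrite /u ler_pdivrMr ?mul1r //; lra.
clearbody t u.
have -> : (t + u - 2 * y) / 2 = (1 - rm) * ((t - u) / 2).
  rewrite (_ : 2 * y = t * rm + u * (2 - rm)); first by ring.
  by rewrite -yt -yu; ring.
apply: sq_le_mul; first by rewrite (_ : (1 - rm) ^+ 2 = (rm - 1) ^+ 2) //; ring.
have [r1|r1] := lerP rm 1.
  have e : (t - u) * (2 - rm) = 2 * t * (1 - rm).
    by rewrite mulrBl -yu yt; ring.
  have h1 : 0 <= t - u by nra.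
  have h2 : t - u <= 2 * (1 - rm) by nra.
  nra.
have e : (u - t) * rm = 2 * u * (rm - 1).
  by rewrite mulrBl -yt yu; ring.
have h1 : 0 <= u - t by nra.
have h2 : u - t <= 2 * (rm - 1) by nra.
nra.
Qed.

Lemma b2 (rm x : R) : 0 <= rm <= 2 -> 0 <= x <= 2 ->
  (2^-1 * (Tmap rm x - x) + 2^-1 * (Tmap (2 - rm) x - x)) ^+ 2 <= (rm - 1) ^+ 4.
Proof.
move=> /andP[r0 r2] /andP[x0 x2]; rewrite /Tmap.
have n20 : (2:R) != 0 by rewrite pnatr_eq0.
have [->|rn0] := eqVneq rm 0.
  rewrite subr0 eqxx (negbTE n20) ?eqxx.
  by case: eqP => [->|_]; nra.
have [->|rn2] := eqVneq rm 2.
  rewrite subrr eqxx.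
  by case: eqP => [->|_]; nra.
have rp : 0 < rm by rewrite lt_def rn0.
have rl : rm < 2 by rewrite lt_neqAle rn2.
have rn0' : 2 - rm != 0 by rewrite gt_eqF // subr_gt0.
have rn2' : 2 - rm != 2.
  by apply/eqP => h; move/eqP: rn0; apply; lra.
rewrite ?(negbTE rn0) ?(negbTE rn2) (negbTE rn0') (negbTE rn2').
rewrite (_ : 2 - (2 - rm) = rm); last by field; rewrite ?n20 ?rn0 ?rn0'.
have rr : 0 < rm < 2 by rewrite rp rl.
case: ifP => xr; case: ifP => xr'.
- rewrite (_ : _ + _ = (x / rm + x / (2 - rm) - 2 * x) / 2); last by field; rewrite ?n20 ?rn0 ?rn0'.
  exact: caseA.
- move: xr' => /negbT; rewrite -ltNge => xr'.
  rewrite (_ : _ + _ = (x - 1) * (rm^-1 - 1)); last by field; rewrite ?n20 ?rn0 ?rn0'.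
  apply: sq_le_mul; first nra.
  by apply: inv_sq; lra.
- move: xr => /negbT; rewrite -ltNge => xr.
  rewrite (_ : _ + _ = (x - 1) * ((2 - rm)^-1 - 1)); last by field; rewrite ?n20 ?rn0 ?rn0'.
  apply: sq_le_mul; first nra.
  rewrite (_ : (rm - 1) ^+ 2 = (2 - rm - 1) ^+ 2); last by field; rewrite ?n20 ?rn0 ?rn0'.
  by apply: inv_sq; lra.
- move: xr => /negbT; rewrite -ltNge => xr.
  move: xr' => /negbT; rewrite -ltNge => xr'.
  rewrite (_ : _ + _ = - (((2 - x) / rm + (2 - x) / (2 - rm) - 2 * (2 - x)) / 2)); last by field; rewrite ?n20 ?rn0 ?rn0'.
  rewrite sqrrN; apply: caseA => //; lra.
Qed.
Lemma b1 (rm x : R) : 0 <= rm <= 2 -> 0 <= x <= 2 ->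
  (Tmap rm x - x) ^+ 2 <= (rm - 1) ^+ 2.
Proof.
move=> /andP[r0 r2] /andP[x0 x2]; rewrite /Tmap.
have [->|rn0] := eqVneq rm 0.
  by case: eqP => [->|_]; nra.
have [->|rn2] := eqVneq rm 2; first nra.
have rp : 0 < rm by rewrite lt_def rn0.
have rl : rm < 2 by rewrite lt_neqAle rn2.
case: ifP => xr.
  set t := x / rm.
  have xt : x = t * rm by rewrite /t mulfVK.
  have t0 : 0 <= t by rewrite /t divr_ge0.
  have t1 : t <= 1 by rewrite /t ler_pdivrMr // mul1r.
  clearbody t; subst x.
  rewrite (_ : (t - t * rm) ^+ 2 = t ^+ 2 * (rm - 1) ^+ 2); last by ring.
  rewrite -[X in _ <= X]mul1r; apply: ler_wpM2r; [exact: sqr_ge0 | nra].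
set s := (2 - x) / (2 - rm).
have s2 : 0 < 2 - rm by lra.
have xs : x = 2 - s * (2 - rm) by rewrite /s mulfVK ?gt_eqF //; lra.
have s0 : 0 <= s by rewrite /s divr_ge0 //; lra.
have s1 : s <= 1 by rewrite /s ler_pdivrMr // mul1r; move: xr => /negbT; rewrite -ltNge; lra.
clearbody s; subst x.
rewrite (_ : (2 - s - (2 - s * (2 - rm))) ^+ 2 = s ^+ 2 * (rm - 1) ^+ 2); last by ring.
rewrite -[X in _ <= X]mul1r; apply: ler_wpM2r; [exact: sqr_ge0 | nra].
Qed.
Lemma leb02 : (@lebesgue_measure R) `[0%R, 2%R]%classic = 2%:E.
Proof. by rewrite lebesgue_measure_itv /= lte_fin ltr0n -EFinD subr0. Qed.

Lemma int_le (f : R -> R) (M : R) : 0 <= M ->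
  (forall x, 0 <= x <= 2 -> f x <= M) -> (forall x, 0 <= f x) ->
  (\int[@lebesgue_measure R]_(x in `[0%R, 2%R]%classic) (f x)%:E <= (M * 2)%:E)%E.
Proof.
move=> M0 fM f0.
have -> : (M * 2)%:E = (\int[@lebesgue_measure R]_(x in `[0%R, 2%R]%classic) (cst M%:E) x)%E.
  rewrite integral_cst // EFinM; congr (_ * _)%E; apply/esym; exact: leb02.
rewrite !ge0_integralE //=; last by move=> x _; rewrite lee_fin.
  apply: ereal_sup_le => _ [h hf <-]; exists h => //= x.
  apply: le_trans (hf x) _; rewrite /patch; case: ifP => // /[!inE] /= xD.
  rewrite lee_fin; apply: fM; move: xD; rewrite /= in_itv /=; by [].
Qed.
End S.

Theorem lemma2p2 (R : realType) :
  exists C : R,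
    forall rm : R, 0 <= rm <= 2 ->
      (forall A : set R, measurable A ->
         rho_meas rm A = pushforward_leb02 (Tmap rm) A)
      /\ (\int[@lebesgue_measure R]_(x in `[0%R, 2%R]%classic)
            ((Tmap rm x - x) ^+ 2)%:E <= (C * (rm - 1) ^+ 2)%:E)%E
      /\ (\int[@lebesgue_measure R]_(x in `[0%R, 2%R]%classic)
            ((2^-1 * (Tmap rm x - x) + 2^-1 * (Tmap (2 - rm) x - x)) ^+ 2)%:E
            <= (C * (rm - 1) ^+ 4)%:E)%E.
Proof.
exists 2 => rm hr; split; first by move=> A mA; exact: push.
split.
  rewrite mulrC; apply: int_le; first exact: sqr_ge0.
    by move=> x hx; exact: b1.
  by move=> x; exact: sqr_ge0.
rewrite mulrC; apply: int_le.
- by rewrite exprn_even_ge0.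
- by move=> x hx; exact: b2.
- by move=> x; exact: sqr_ge0.
Qed.
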